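(* Let $m$ be a non-empty finite word over $D=\{E,N,S,W\}$. If the word $mm$ is a free path, then the bi-infinite word ${}^{\omega}m^{\omega}=\cdots mmm\cdots$ is a free path.
   Context: $D=\{E,N,S,W\}$ with $E=(1,0)$, $N=(0,1)$, $S=(0,-1)$, $W=(-1,0)$; $\mathbb Z^2$ is viewed as the grid graph in which two points are adjacent iff they are at Euclidean distance $1$. A free path is a (finite, forward infinite, backward infinite or bi-infinite) word over $D$ such that the walk in $\mathbb Z^2$ obtained by starting at some point and successively adding the letters of the word as unit vectors never visits a vertex twice (i.e. it is a simple path; this does not depend on the starting point). *)

(* Defs.v *)
From Stdlib Require Import ZArith List.
Import ListNotations.
Open Scope Z_scope.

Inductive dir : Type := E | N | S | W.

Definition vec (d : dir) : Z * Z :=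
  match d with
  | E => (1, 0) | N => (0, 1) | S => (0, -1) | W => (-1, 0)
  end.

Definition padd (p q : Z * Z) : Z * Z := (fst p + fst q, snd p + snd q).

Definition free_finite (w : list dir) : Prop :=
  exists p : nat -> Z * Z,
    (forall i : nat, (i < length w)%nat -> p (Datatypes.S i) = padd (p i) (vec (nth i w E))) /\
    (forall i j : nat, (i <= length w)%nat -> (j <= length w)%nat -> p i = p j -> i = j).

Definition free_biinf (w : Z -> dir) : Prop :=
  exists p : Z -> Z * Z,
    (forall i : Z, p (i + 1) = padd (p i) (vec (w i))) /\
    (forall i j : Z, p i = p j -> i = j).

Definition biperiodic (m : list dir) : Z -> dir :=
  fun i => nth (Z.to_nat (i mod Z.of_nat (length m))) m E.

(* Main.v *)
Require Import Defs.
From Stdlib Require Import ZArith List Lia Classical.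
Import ListNotations.
Open Scope Z_scope.

Definition adjz (P Q : Z*Z) : Prop := Z.abs (fst P - fst Q) + Z.abs (snd P - snd Q) = 1.

Lemma adjz_sym P Q : adjz P Q -> adjz Q P.
Proof. unfold adjz; destruct P, Q; simpl; lia. Qed.

Definition delta (x y : Z) (P Q : Z*Z) : Z :=
  if Z.eq_dec (snd P) (snd Q) then
    if Z_lt_dec y (snd P) then
      if Z.eq_dec (fst P) x then (if Z.eq_dec (fst Q) (x+1) then 1 else 0)
      else if Z.eq_dec (fst P) (x+1) then (if Z.eq_dec (fst Q) x then -1 else 0) else 0
    else 0
  else 0.

Definition IR (x y : Z) (P : Z*Z) : Z :=
  if Z.eq_dec (fst P) (x+1) then (if Z_lt_dec y (snd P) then 1 else 0) else 0.
Definition IC (x : Z) (P : Z*Z) : Z := if Z_lt_dec x (fst P) then 1 else 0.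

Ltac dd := repeat match goal with
  | |- context [Z.eq_dec ?a ?b] => destruct (Z.eq_dec a b)
  | |- context [Z_lt_dec ?a ?b] => destruct (Z_lt_dec a b)
  end.

Lemma pne (a b c d : Z) : (a,b) <> (c,d) -> ~ (a = c /\ b = d).
Proof. intros H [-> ->]; auto. Qed.

Lemma delta_vert x y a b c d : adjz (a,b) (c,d) -> (a,b) <> (x,y+1) -> (c,d) <> (x,y+1) ->
  delta x (y+1) (a,b) (c,d) = delta x y (a,b) (c,d).
Proof.
  unfold adjz, delta; simpl; intros H H1 H2.
  apply pne in H1; apply pne in H2. dd; lia.
Qed.

Lemma delta_horiz x y a b c d : adjz (a,b) (c,d) -> (a,b) <> (x+1,y) -> (c,d) <> (x+1,y) ->
  delta (x+1) y (a,b) (c,d) - delta x y (a,b) (c,d) = IR x y (a,b) - IR x y (c,d).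
Proof.
  unfold adjz, delta, IR; simpl; intros H H1 H2.
  apply pne in H1; apply pne in H2. dd; lia.
Qed.

Lemma delta_bottom x y a b c d : adjz (a,b) (c,d) -> y < b -> y < d ->
  delta x y (a,b) (c,d) = IC x (c,d) - IC x (a,b).
Proof.
  unfold adjz, delta, IC; simpl; intros H H1 H2. dd; lia.
Qed.

Lemma delta_top x y a b Q : b <= y -> delta x y (a,b) Q = 0.
Proof.
  unfold delta; simpl; intros H. dd; lia.
Qed.

Fixpoint Fsum (X : Z -> Z*Z) (x y t0 : Z) (K : nat) : Z :=
  match K with
  | O => 0
  | Datatypes.S k => Fsum X x y t0 k + delta x y (X (t0 + Z.of_nat k)) (X (t0 + Z.of_nat k + 1))
  end.


Lemma Fsum_vert (X : Z -> Z*Z) (HX : forall t, adjz (X t) (X (t+1))) x y t0 K : (forall t, X t <> (x, y+1)) ->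
  Fsum X x (y+1) t0 K = Fsum X x y t0 K.
Proof.
  intros H; induction K as [|k IH]; simpl; auto.
  rewrite IH. f_equal.
  specialize (HX (t0 + Z.of_nat k)).
  destruct (X (t0 + Z.of_nat k)) as [a b] eqn:E1, (X (t0 + Z.of_nat k + 1)) as [c d] eqn:E2.
  apply delta_vert; auto; [rewrite <- E1 | rewrite <- E2]; auto.
Qed.

Lemma Fsum_horiz (X : Z -> Z*Z) (HX : forall t, adjz (X t) (X (t+1))) x y t0 K : (forall t, X t <> (x+1, y)) ->
  Fsum X (x+1) y t0 K - Fsum X x y t0 K = IR x y (X t0) - IR x y (X (t0 + Z.of_nat K)).
Proof.
  intros H; induction K as [|k IH]; cbn [Fsum].
  - rewrite Z.add_0_r; lia.
  - specialize (HX (t0 + Z.of_nat k)).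
    assert (Hk : t0 + Z.of_nat (Datatypes.S k) = t0 + Z.of_nat k + 1) by lia.
    rewrite Hk.
    destruct (X (t0 + Z.of_nat k)) as [a b] eqn:E1, (X (t0 + Z.of_nat k + 1)) as [c d] eqn:E2.
    pose proof (delta_horiz x y a b c d HX) as D.
    rewrite <- E1, <- E2 in D. specialize (D (H _) (H _)).
    rewrite E1, E2 in D. lia.
Qed.

Lemma Fsum_bottom (X : Z -> Z*Z) (HX : forall t, adjz (X t) (X (t+1))) x y t0 K : (forall i, (i <= K)%nat -> y < snd (X (t0 + Z.of_nat i))) ->
  Fsum X x y t0 K = IC x (X (t0 + Z.of_nat K)) - IC x (X t0).
Proof.
  intros H; induction K as [|k IH]; cbn [Fsum].
  - rewrite Z.add_0_r; lia.
  - rewrite IH by (intros; apply H; lia).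
    specialize (HX (t0 + Z.of_nat k)).
    assert (Hk : t0 + Z.of_nat (Datatypes.S k) = t0 + Z.of_nat k + 1) by lia.
    pose proof (H k ltac:(lia)) as H1. pose proof (H (Datatypes.S k) ltac:(lia)) as H2.
    rewrite Hk in *.
    destruct (X (t0 + Z.of_nat k)) as [a b] eqn:E1, (X (t0 + Z.of_nat k + 1)) as [c d] eqn:E2.
    simpl in *. rewrite (delta_bottom x y a b c d); auto. lia.
Qed.

Lemma Fsum_top (X : Z -> Z*Z) (HX : forall t, adjz (X t) (X (t+1))) x y t0 K : (forall i, (i < K)%nat -> snd (X (t0 + Z.of_nat i)) <= y) ->
  Fsum X x y t0 K = 0.
Proof.
  intros H; induction K as [|k IH]; simpl; auto.
  rewrite IH by (intros; apply H; lia).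
  pose proof (H k ltac:(lia)) as H1.
  destruct (X (t0 + Z.of_nat k)) as [a b]. simpl in H1. rewrite delta_top; auto.
Qed.

Lemma bound_nat (f : nat -> Z) K : exists M, forall i, (i <= K)%nat -> Z.abs (f i) <= M.
Proof.
  induction K as [|k [M HM]].
  - exists (Z.abs (f O)); intros i Hi; assert (i = O) by lia; subst; lia.
  - exists (Z.max M (Z.abs (f (Datatypes.S k)))); intros i Hi.
    destruct (Nat.eq_dec i (Datatypes.S k)) as [->|Hn]; [lia|].
    specialize (HM i ltac:(lia)); lia.
Qed.

Definition hh (ux uy : Z) (P : Z*Z) : Z := ux * snd P - uy * fst P.

Lemma Xshift (X : Z -> Z*Z) r ux uy : (forall t, X (t + r) = padd (X t) (ux,uy)) ->
  forall q : nat, forall t, X (t + Z.of_nat q * r) = (fst (X t) + Z.of_nat q * ux, snd (X t) + Z.of_nat q * uy).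
Proof.
  intros H q; induction q as [|q IH]; intros t.
  - rewrite Z.mul_0_l, Z.add_0_r. destruct (X t); simpl; f_equal; lia.
  - replace (t + Z.of_nat (Datatypes.S q) * r) with ((t + Z.of_nat q * r) + r) by lia.
    rewrite H, IH. unfold padd; cbn [fst snd]. rewrite Nat2Z.inj_succ. f_equal; ring.
Qed.

Lemma sep1 (X : Z -> Z*Z) (r ux uy : Z) (Y : nat -> Z*Z) (NN : nat) :
  r > 0 -> ux > 0 -> (forall t, X (t + r) = padd (X t) (ux,uy)) ->
  (forall t, adjz (X t) (X (t+1))) ->
  (forall i, (i < NN)%nat -> adjz (Y i) (Y (Datatypes.S i))) ->
  (forall i t, (i <= NN)%nat -> Y i <> X t) ->
  (forall t, hh ux uy (Y O) > hh ux uy (X t)) ->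
  (forall t, hh ux uy (Y NN) < hh ux uy (X t)) -> False.
Proof.
  intros Hr Hux Hper HX HY Hav Htop Hbot.
  destruct (bound_nat (fun i => fst (Y i)) NN) as [M HM]. simpl in HM.
  set (q := Z.to_nat (M + Z.abs (fst (X 0)) + 1)).
  set (t0 := - Z.of_nat q * r).
  set (t1 := Z.of_nat q * r).
  pose proof (Xshift X r ux uy Hper q 0) as E1.
  pose proof (Xshift X r ux uy Hper q t0) as E0.
  replace (0 + Z.of_nat q * r) with t1 in E1 by (unfold t1; lia).
  replace (t0 + Z.of_nat q * r) with 0 in E0 by (unfold t0; lia).
  assert (Hq : Z.of_nat q >= M + Z.abs (fst (X 0)) + 1) by (unfold q; lia).
  assert (Hx1 : fst (X t1) > M) by (rewrite E1; simpl; nia).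
  assert (Hx0 : fst (X t0) < - M) by (rewrite E0 in Hq; simpl in Hq; nia).
  set (K := Z.to_nat (t1 - t0)).
  assert (HK : t0 + Z.of_nat K = t1) by (unfold K; rewrite Z2Nat.id; [lia| unfold t1, t0; nia]).
  destruct (bound_nat (fun i => snd (X (t0 + Z.of_nat i))) K) as [B HB]. simpl in HB.
  set (F := fun P : Z*Z => Fsum X (fst P) (snd P) t0 K).
  assert (Hstep : forall i, (i < NN)%nat -> F (Y (Datatypes.S i)) = F (Y i)).
  { intros i Hi. pose proof (HY i Hi) as A.
    pose proof (Hav i) as Av0. pose proof (Hav (Datatypes.S i)) as Av1.
    pose proof (HM i ltac:(lia)) as M0. pose proof (HM (Datatypes.S i) ltac:(lia)) as M1.
    unfold F.
    destruct (Y i) as [a b], (Y (Datatypes.S i)) as [c d]. unfold adjz in A. simpl in *.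
    assert (D : (c = a /\ d = b + 1) \/ (c = a /\ d = b - 1) \/ (c = a + 1 /\ d = b) \/ (c = a - 1 /\ d = b)) by lia.
    destruct D as [[-> ->]|[[-> ->]|[[-> ->]|[-> ->]]]].
    - apply Fsum_vert; auto. intros t He; apply (Av1 t); auto; lia.
    - replace b with ((b - 1) + 1) at 2 by lia. symmetry. apply Fsum_vert; auto.
      intros t He. apply (Av0 t); [lia|]. rewrite He. f_equal; lia.
    - pose proof (Fsum_horiz X HX a b t0 K) as FH.
      assert (FH' : Fsum X (a+1) b t0 K - Fsum X a b t0 K = IR a b (X t0) - IR a b (X (t0 + Z.of_nat K))).
      { apply FH. intros t He; apply (Av1 t); auto; lia. }
      rewrite HK in FH'. unfold IR in FH'. revert FH'. dd; lia.
    - pose proof (Fsum_horiz X HX (a-1) b t0 K) as FH.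
      replace (a - 1 + 1) with a in FH by lia.
      assert (FH' : Fsum X a b t0 K - Fsum X (a-1) b t0 K = IR (a - 1) b (X t0) - IR (a - 1) b (X (t0 + Z.of_nat K))).
      { apply FH. intros t He; apply (Av0 t); auto; lia. }
      rewrite HK in FH'. unfold IR in FH'. revert FH'. dd; lia. }
  assert (HYc : forall i, (i <= NN)%nat -> F (Y i) = F (Y O)).
  { induction i; intros Hi; auto. rewrite Hstep by lia. apply IHi; lia. }
  assert (Ht : F (Y O) = 0).
  { destruct (Y O) as [a b] eqn:EY.
    assert (Up : forall k : nat, F (a, b + Z.of_nat k) = F (a, b)).
    { induction k as [|k IH]; [unfold F; simpl; rewrite Z.add_0_r; auto|].
      rewrite <- IH. unfold F; cbn [fst snd].
      replace (b + Z.of_nat (Datatypes.S k)) with ((b + Z.of_nat k) + 1) by lia.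
      apply Fsum_vert; auto. intros t He.
      specialize (Htop t). try rewrite EY in Htop. unfold hh in Htop. rewrite He in Htop.
      simpl in Htop. nia. }
    rewrite <- (Up (Z.to_nat (B - b))). unfold F; simpl.
    apply Fsum_top; auto. intros i Hi. specialize (HB i ltac:(lia)). lia. }
  assert (Hb : F (Y NN) = 1).
  { destruct (Y NN) as [a b] eqn:EY.
    assert (Dn : forall k : nat, F (a, b - Z.of_nat k) = F (a, b)).
    { induction k as [|k IH]; [unfold F; simpl; rewrite Z.sub_0_r; auto|].
      rewrite <- IH. unfold F; cbn [fst snd].
      replace (b - Z.of_nat k) with ((b - Z.of_nat (Datatypes.S k)) + 1) by lia.
      symmetry. apply Fsum_vert; auto. intros t He.
      specialize (Hbot t). try rewrite EY in Hbot. unfold hh in Hbot. rewrite He in Hbot.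
      simpl in Hbot. nia. }
    rewrite <- (Dn (Z.to_nat (b + B + 1))). unfold F; simpl.
    rewrite Fsum_bottom; auto.
    - rewrite HK. pose proof (HM NN ltac:(lia)) as HMN. try rewrite EY in HMN. simpl in HMN.
      unfold IC. dd; lia.
    - intros i Hi. specialize (HB i Hi). lia. }
  pose proof (HYc NN ltac:(lia)). lia.
Qed.

Definition SepHyp (X : Z -> Z*Z) (r ux uy : Z) (Y : nat -> Z*Z) (NN : nat) : Prop :=
  r > 0 /\ (forall t, X (t + r) = padd (X t) (ux,uy)) /\
  (forall t, adjz (X t) (X (t+1))) /\
  (forall i, (i < NN)%nat -> adjz (Y i) (Y (Datatypes.S i))) /\
  (forall i t, (i <= NN)%nat -> Y i <> X t).

Definition Crosses (X : Z -> Z*Z) (ux uy : Z) (Y : nat -> Z*Z) (NN : nat) : Prop :=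
  ((forall t, hh ux uy (Y O) > hh ux uy (X t)) /\ (forall t, hh ux uy (Y NN) < hh ux uy (X t))) \/
  ((forall t, hh ux uy (Y O) < hh ux uy (X t)) /\ (forall t, hh ux uy (Y NN) > hh ux uy (X t))).

Lemma sep2 X r ux uy Y NN : ux > 0 -> SepHyp X r ux uy Y NN -> Crosses X ux uy Y NN -> False.
Proof.
  intros Hux (Hr & Hp & HX & HY & Hav) [[A B]|[A B]].
  - exact (sep1 X r ux uy Y NN Hr Hux Hp HX HY Hav A B).
  - apply (sep1 X r ux uy (fun i => Y (NN - i)%nat) NN); auto.
    + intros i Hi. replace (NN - i)%nat with (Datatypes.S (NN - Datatypes.S i)) by lia.
      apply adjz_sym, HY; lia.
    + intros i t Hi; apply Hav; lia.
    + rewrite Nat.sub_0_r; auto.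
    + rewrite Nat.sub_diag; auto.
Qed.

Lemma sep3 X r ux uy Y NN : ux <> 0 -> SepHyp X r ux uy Y NN -> Crosses X ux uy Y NN -> False.
Proof.
  intros Hux H C.
  destruct (Z_lt_le_dec 0 ux) as [Hp|Hn]; [eapply sep2; eauto; lia|].
  destruct H as (Hr & Hp & HX & HY & Hav).
  apply (sep2 (fun t => X (-t)) r (-ux) (-uy) Y NN); [lia| |].
  - refine (conj Hr (conj _ (conj _ (conj HY _)))).
    + intros t. specialize (Hp (-t - r)). replace (-t - r + r) with (-t) in Hp by lia.
      replace (- (t + r)) with (-t - r) by lia. rewrite Hp. unfold padd; destruct (X (-t-r)); simpl; f_equal; lia.
    + intros t. replace (- (t+1)) with (-(t+1)) by lia. apply adjz_sym.
      specialize (HX (-(t+1))). replace (-(t+1)+1) with (-t) in HX by lia. auto.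
    + intros i t Hi; apply Hav; auto.
  - unfold Crosses, hh in *. destruct C as [[A B]|[A B]]; [right|left]; split; intros t;
      [specialize (A (-t))|specialize (B (-t))|specialize (A (-t))|specialize (B (-t))]; lia.
Qed.

Definition swp (P : Z*Z) : Z*Z := (snd P, fst P).

Lemma sep_gen X r ux uy Y NN : (ux <> 0 \/ uy <> 0) -> SepHyp X r ux uy Y NN -> Crosses X ux uy Y NN -> False.
Proof.
  intros Hu H C.
  destruct (Z.eq_dec ux 0) as [H0|Hn]; [|eapply sep3; eauto].
  destruct H as (Hr & Hp & HX & HY & Hav).
  apply (sep3 (fun t => swp (X t)) r uy ux (fun i => swp (Y i)) NN); [lia| |].
  - refine (conj Hr (conj _ (conj _ (conj _ _)))).
    + intros t. rewrite Hp. unfold swp, padd; destruct (X t); simpl; f_equal; lia.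
    + intros t. specialize (HX t). unfold adjz, swp in *. destruct (X t), (X (t+1)); simpl in *; lia.
    + intros i Hi. specialize (HY i Hi). unfold adjz, swp in *. destruct (Y i), (Y (Datatypes.S i)); simpl in *; lia.
    + intros i t Hi He. apply (Hav i t Hi). unfold swp in He. destruct (Y i), (X t); simpl in *.
      inversion He; subst; auto.
  - subst ux. unfold Crosses, hh, swp in *. simpl. destruct C as [[A B]|[A B]]; [right|left]; split; intros t;
      [specialize (A t)|specialize (B t)|specialize (A t)|specialize (B t)]; lia.
Qed.

Lemma pair_eq (P Q : Z*Z) : fst P = fst Q -> snd P = snd Q -> P = Q.
Proof. destruct P, Q; simpl; intros -> ->; auto. Qed.

Lemma min_nat (P : nat -> Prop) : (exists d, P d) -> exists d, P d /\ forall d', P d' -> (d <= d')%nat.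
Proof.
  intros [d Hd]. induction d as [d IH] using (well_founded_induction lt_wf).
  destruct (classic (exists d', P d' /\ (d' < d)%nat)) as [[d' [Hd' Hlt]]|Hno].
  - apply (IH d' Hlt Hd').
  - exists d. split; auto. intros d' Hd'.
    destruct (Nat.lt_ge_cases d' d); [exfalso; apply Hno; eauto | auto].
Qed.

Lemma argmax_nat (f : nat -> Z) K : exists k, (k <= K)%nat /\ forall i, (i <= K)%nat -> f i <= f k.
Proof.
  induction K as [|K [k [Hk H]]].
  - exists O; split; auto; intros i Hi; assert (i = O) by lia; subst; lia.
  - destruct (Z_le_dec (f k) (f (Datatypes.S K))).
    + exists (Datatypes.S K); split; auto. intros i Hi.
      destruct (Nat.eq_dec i (Datatypes.S K)) as [->|]; [lia|]. specialize (H i ltac:(lia)); lia.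
    + exists k; split; [lia|]. intros i Hi.
      destruct (Nat.eq_dec i (Datatypes.S K)) as [->|]; [lia|]. apply H; lia.
Qed.

Lemma per_mod (g : Z -> Z) r : r > 0 -> (forall t, g (t + r) = g t) -> forall t, g t = g (t mod r).
Proof.
  intros Hr H.
  assert (Hq : forall q : nat, forall a, g (a + Z.of_nat q * r) = g a).
  { induction q as [|q IH]; intros a; [rewrite Z.mul_0_l, Z.add_0_r; auto|].
    replace (a + Z.of_nat (Datatypes.S q) * r) with ((a + Z.of_nat q * r) + r) by lia.
    rewrite H; auto. }
  intros t. pose proof (Z.div_mod t r ltac:(lia)) as D.
  destruct (Z_le_dec 0 (t / r)).
  - rewrite D at 1. rewrite <- (Hq (Z.to_nat (t / r)) (t mod r)). f_equal. rewrite Z2Nat.id; lia.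
  - rewrite <- (Hq (Z.to_nat (- (t / r))) t). f_equal. rewrite Z2Nat.id; lia.
Qed.

Lemma per_max (g : Z -> Z) r : r > 0 -> (forall t, g (t + r) = g t) -> exists t0, forall t, g t <= g t0.
Proof.
  intros Hr H.
  destruct (argmax_nat (fun i => g (Z.of_nat i)) (Z.to_nat (r - 1))) as [k [Hk Hm]].
  exists (Z.of_nat k). intros t. rewrite (per_mod g r Hr H t).
  pose proof (Z.mod_pos_bound t r ltac:(lia)).
  specialize (Hm (Z.to_nat (t mod r)) ltac:(lia)). simpl in Hm. rewrite Z2Nat.id in Hm by lia. auto.
Qed.

Lemma walk_between (Z0 : Z -> Z*Z) : (forall t, adjz (Z0 t) (Z0 (t+1))) -> forall a b,
  exists (Y : nat -> Z*Z) (NN : nat), Y O = Z0 a /\ Y NN = Z0 b /\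
    (forall i, (i < NN)%nat -> adjz (Y i) (Y (Datatypes.S i))) /\ (forall i, (i <= NN)%nat -> exists t, Y i = Z0 t).
Proof.
  intros H a b. destruct (Z_le_dec a b).
  - exists (fun i => Z0 (a + Z.of_nat i)), (Z.to_nat (b - a)). repeat split.
    + f_equal; lia.
    + f_equal; lia.
    + intros i Hi. replace (a + Z.of_nat (Datatypes.S i)) with ((a + Z.of_nat i) + 1) by lia. apply H.
    + intros i Hi; eauto.
  - exists (fun i => Z0 (a - Z.of_nat i)), (Z.to_nat (a - b)). repeat split.
    + f_equal; lia.
    + f_equal; lia.
    + intros i Hi. apply adjz_sym. specialize (H (a - Z.of_nat (Datatypes.S i))).
      replace (a - Z.of_nat (Datatypes.S i) + 1) with (a - Z.of_nat i) in H by lia. auto.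
    + intros i Hi; eauto.
Qed.

Lemma unit_dir ux uy : ux <> 0 \/ uy <> 0 -> exists ex ey, Z.abs ex + Z.abs ey = 1 /\ ux * ey - uy * ex > 0.
Proof.
  intros H. destruct (Z_lt_le_dec 0 ux); [exists 0, 1; lia|].
  destruct (Z_lt_le_dec ux 0); [exists 0, (-1); lia|].
  destruct (Z_lt_le_dec 0 uy); [exists (-1), 0; nia|]. exists 1, 0; nia.
Qed.

Lemma no_disjoint_translate (X : Z -> Z*Z) r ux uy vx vy : r > 0 -> (ux <> 0 \/ uy <> 0) ->
  (forall t, X (t + r) = padd (X t) (ux,uy)) -> (forall t, adjz (X t) (X (t+1))) ->
  ux * vy - uy * vx = 0 -> (forall t1 t2, padd (X t1) (vx,vy) <> X t2) -> False.
Proof.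
  intros Hr Hu Hp HX Hv Hd.
  set (g := fun t => hh ux uy (X t)).
  assert (Hg : forall t, g (t + r) = g t).
  { intros t; unfold g, hh; rewrite Hp; unfold padd; destruct (X t); simpl; ring. }
  destruct (per_max g r Hr Hg) as [ttop Htop].
  destruct (per_max (fun t => - g t) r Hr ltac:(intros; simpl; rewrite Hg; auto)) as [tbot Hbot].
  destruct (unit_dir ux uy Hu) as [ex [ey [He1 He2]]].
  set (Z0 := fun t => padd (X t) (vx, vy)).
  assert (HZ : forall t, adjz (Z0 t) (Z0 (t+1))).
  { intros t; unfold Z0; specialize (HX t); unfold adjz, padd in *; destruct (X t), (X (t+1)); simpl in *; lia. }
  destruct (walk_between Z0 HZ ttop tbot) as [Y [NN [Y0 [YN [HY HYin]]]]].
  set (Ptop := (fst (Z0 ttop) + ex, snd (Z0 ttop) + ey)).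
  set (Pbot := (fst (Z0 tbot) - ex, snd (Z0 tbot) - ey)).
  set (Y' := fun k => match k with O => Ptop | Datatypes.S k' => if Nat.leb k' NN then Y k' else Pbot end).
  assert (HhZ : forall t, hh ux uy (Z0 t) = g t).
  { intros t; unfold Z0, g, hh, padd; destruct (X t); simpl. nia. }
  assert (Htop' : forall t, hh ux uy Ptop > hh ux uy (X t)).
  { intros t. specialize (Htop t). unfold g in Htop.
    assert (hh ux uy Ptop = hh ux uy (Z0 ttop) + (ux * ey - uy * ex)) by (unfold Ptop, hh; simpl; ring).
    rewrite HhZ in H. unfold g in H. lia. }
  assert (Hbot' : forall t, hh ux uy Pbot < hh ux uy (X t)).
  { intros t. specialize (Hbot t). unfold g in Hbot.
    assert (hh ux uy Pbot = hh ux uy (Z0 tbot) - (ux * ey - uy * ex)) by (unfold Pbot, hh; simpl; ring).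
    rewrite HhZ in H. unfold g in H. lia. }
  assert (YS : forall k, Y' (Datatypes.S k) = if Nat.leb k NN then Y k else Pbot) by reflexivity.
  assert (Y0' : Y' O = Ptop) by reflexivity.
  clearbody Y'.
  apply (sep_gen X r ux uy Y' (Datatypes.S (Datatypes.S NN)) Hu).
  - refine (conj Hr (conj Hp (conj HX (conj _ _)))).
    + intros i Hi. destruct i as [|i].
      * rewrite Y0', YS. destruct (Nat.leb_spec 0 NN); [|lia]. rewrite Y0. unfold Ptop, adjz. simpl. lia.
      * rewrite !YS. destruct (Nat.leb_spec i NN); destruct (Nat.leb_spec (Datatypes.S i) NN); try lia.
        -- apply HY; lia.
        -- assert (i = NN) by lia. subst i. rewrite YN. unfold Pbot, adjz; simpl. lia.
    + intros i t Hi. destruct i as [|i].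
      * rewrite Y0'. intros E. specialize (Htop' t). rewrite E in Htop'. lia.
      * rewrite YS. destruct (Nat.leb_spec i NN).
        -- destruct (HYin i H) as [t' Ht']. rewrite Ht'. apply Hd.
        -- intros E. specialize (Hbot' t). rewrite E in Hbot'. lia.
  - left. split; [rewrite Y0'; auto|]. rewrite YS. destruct (Nat.leb_spec (Datatypes.S NN) NN); [lia|]. auto.
Qed.

Lemma divmod_succ t r : r > 0 ->
  (t mod r + 1 < r /\ (t+1) mod r = t mod r + 1 /\ (t+1)/r = t/r) \/
  (t mod r + 1 = r /\ (t+1) mod r = 0 /\ (t+1)/r = t/r + 1).
Proof.
  intros Hr. pose proof (Z.div_mod t r ltac:(lia)) as D. pose proof (Z.mod_pos_bound t r ltac:(lia)) as B.
  destruct (Z_lt_le_dec (t mod r + 1) r).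
  - left. split; auto. split.
    + symmetry; apply (Z.mod_unique _ _ (t / r)); lia.
    + symmetry; apply (Z.div_unique _ _ _ (t mod r + 1)); lia.
  - right. split; [lia|]. split.
    + symmetry; apply (Z.mod_unique _ _ (t / r + 1)); lia.
    + symmetry; apply (Z.div_unique _ _ _ 0); lia.
Qed.

Lemma core (p : nat -> Z*Z) (n : nat) (vx vy : Z) :
  (forall i, (i < 2 * n)%nat -> adjz (p i) (p (Datatypes.S i))) ->
  (forall i j, (i <= 2 * n)%nat -> (j <= 2 * n)%nat -> p i = p j -> i = j) ->
  (forall k, (k <= n)%nat -> p (k + n)%nat = padd (p k) (vx,vy)) ->
  forall a b c, (a < b < n)%nat -> fst (p b) = fst (p a) + c*vx -> snd (p b) = snd (p a) + c*vy -> False.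
Proof.
  intros Hadj Hinj Hsh a0 b0 c0 Hab0 E1 E2.
  assert (Hv : vx <> 0 \/ vy <> 0).
  { destruct (Z.eq_dec vx 0), (Z.eq_dec vy 0); auto. exfalso.
    pose proof (Hsh O ltac:(lia)) as H. simpl in H. subst.
    assert (p n = p O) by (rewrite H; unfold padd; destruct (p O); simpl; f_equal; lia).
    specialize (Hinj n O ltac:(lia) ltac:(lia) H0). lia. }
  assert (Hsmall : forall a b c, (a < b < n)%nat -> fst (p b) = fst (p a) + c*vx -> snd (p b) = snd (p a) + c*vy -> c < -1 \/ c > 1).
  { intros a b c Hab F1 F2.
    destruct (Z_lt_le_dec c (-1)); [lia|]. destruct (Z_lt_le_dec 1 c); [lia|]. exfalso.
    assert (c = 0 \/ c = 1 \/ c = -1) as [ -> | [ -> | -> ] ] by lia.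
    - assert (p b = p a) by (apply pair_eq; lia). specialize (Hinj b a ltac:(lia) ltac:(lia) H). lia.
    - assert (p b = p (a + n)%nat).
      { rewrite Hsh by lia. unfold padd; apply pair_eq; simpl; lia. }
      specialize (Hinj b (a + n)%nat ltac:(lia) ltac:(lia) H). lia.
    - assert (p a = p (b + n)%nat).
      { rewrite Hsh by lia. unfold padd; apply pair_eq; simpl; lia. }
      specialize (Hinj a (b + n)%nat ltac:(lia) ltac:(lia) H). lia. }
  destruct (min_nat (fun d => exists a b c, (a < b < n)%nat /\ fst (p b) = fst (p a) + c*vx /\
                                snd (p b) = snd (p a) + c*vy /\ (b - a)%nat = d)) as [r [[i [j [l [Hij [L1 [L2 Hr]]]]]] Hmin]].
  { exists (b0 - a0)%nat, a0, b0, c0; auto. }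
  assert (Hl : l < -1 \/ l > 1) by (eapply Hsmall; eauto).
  assert (Hmin' : forall a b c, (a < b < n)%nat -> fst (p b) = fst (p a) + c*vx -> snd (p b) = snd (p a) + c*vy -> (r <= b - a)%nat).
  { intros a b c Hab F1 F2. apply Hmin. exists a, b, c; auto. }
  clear Hmin a0 b0 c0 Hab0 E1 E2.
  set (rZ := Z.of_nat r).
  assert (HrZ : rZ > 0) by (unfold rZ; lia).
  set (X := fun t => (fst (p (i + Z.to_nat (t mod rZ))%nat) + (t / rZ) * l * vx,
                      snd (p (i + Z.to_nat (t mod rZ))%nat) + (t / rZ) * l * vy)).
  apply (no_disjoint_translate X rZ (l*vx) (l*vy) vx vy HrZ).
  - destruct Hv; [left|right]; nia.
  - intros t. unfold X, padd. simpl.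
    replace (t + rZ) with (t + 1 * rZ) by lia. rewrite Z_mod_plus_full, Z.div_add by lia.
    f_equal; ring.
  - intros t. unfold X. pose proof (Z.mod_pos_bound t rZ ltac:(lia)) as B.
    destruct (divmod_succ t rZ HrZ) as [[H1 [H2 H3]]|[H1 [H2 H3]]]; rewrite H2, H3.
    + replace (i + Z.to_nat (t mod rZ + 1))%nat with (Datatypes.S (i + Z.to_nat (t mod rZ))) by lia.
      specialize (Hadj (i + Z.to_nat (t mod rZ))%nat ltac:(unfold rZ in *; lia)).
      unfold adjz in *. simpl in *. lia.
    + replace (i + Z.to_nat 0)%nat with i by lia.
      specialize (Hadj (i + Z.to_nat (t mod rZ))%nat ltac:(unfold rZ in *; lia)).
      replace (Datatypes.S (i + Z.to_nat (t mod rZ))) with j in Hadj by (unfold rZ in *; lia).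
      unfold adjz in *. simpl in *. rewrite L1, L2 in Hadj.
      replace ((t / rZ + 1) * l * vx) with (t / rZ * l * vx + l * vx) by ring.
      replace ((t / rZ + 1) * l * vy) with (t / rZ * l * vy + l * vy) by ring.
      lia.
  - ring.
  - intros t1 t2 E. unfold X, padd in E. simpl in E. injection E as F1 F2.
    pose proof (Z.mod_pos_bound t1 rZ ltac:(lia)) as B1.
    pose proof (Z.mod_pos_bound t2 rZ ltac:(lia)) as B2.
    set (e1 := Z.to_nat (t1 mod rZ)) in *. set (e2 := Z.to_nat (t2 mod rZ)) in *.
    assert (He1 : (e1 < r)%nat) by (unfold e1, rZ in *; lia).
    assert (He2 : (e2 < r)%nat) by (unfold e2, rZ in *; lia).
    set (q1 := t1 / rZ) in *. set (q2 := t2 / rZ) in *.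
    destruct (Nat.lt_total e1 e2) as [Hlt|[Heq|Hgt]].
    + specialize (Hmin' (i + e1)%nat (i + e2)%nat ((q1 - q2) * l + 1) ltac:(lia)).
      assert (r <= i + e2 - (i + e1))%nat; [apply Hmin'; nia|lia].
    + rewrite Heq in F1, F2.
      assert (Hc : ((q1 - q2) * l + 1) * vx = 0 /\ ((q1 - q2) * l + 1) * vy = 0) by (split; nia).
      destruct Hc as [C1 C2].
      assert (Hz : (q1 - q2) * l + 1 = 0).
      { destruct Hv as [Hx|Hy]; [apply Z.mul_eq_0 in C1 | apply Z.mul_eq_0 in C2]; intuition. }
      assert (Ha : Z.abs ((q1 - q2) * l) = 1) by lia. rewrite Z.abs_mul in Ha.
      assert (Z.abs l >= 2) by lia. assert (0 <= Z.abs (q1 - q2)) by lia.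
      revert Ha H H0. generalize (Z.abs l) (Z.abs (q1 - q2)). intros z1 z2 ? ? ?.
      destruct (Z.eq_dec z2 0); [subst; lia|]. nia.
    + specialize (Hmin' (i + e2)%nat (i + e1)%nat (-((q1 - q2) * l + 1)) ltac:(lia)).
      assert (r <= i + e1 - (i + e2))%nat; [apply Hmin'; nia|lia].
Qed.

Theorem lemma1 (m : list dir) :
  m <> [] -> free_finite (m ++ m) -> free_biinf (biperiodic m).
Proof.
  intros Hm [p [HP HI]].
  rewrite length_app in HP, HI.
  set (n := length m) in *.
  assert (Hn : (n > 0)%nat) by (destruct m; [congruence|simpl; unfold n; simpl; lia]).
  assert (Hstep : forall i, (i < n)%nat -> p (Datatypes.S i) = padd (p i) (vec (nth i m E))).
  { intros i Hi. rewrite HP by lia. rewrite app_nth1 by auto. auto. }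
  assert (Hadj : forall i, (i < 2 * n)%nat -> adjz (p i) (p (Datatypes.S i))).
  { intros i Hi. rewrite HP by lia. unfold adjz, padd. destruct (nth i (m ++ m) E); simpl; lia. }
  set (vx := fst (p n) - fst (p O)). set (vy := snd (p n) - snd (p O)).
  assert (Hsh : forall k, (k <= n)%nat -> p (k + n)%nat = padd (p k) (vx,vy)).
  { induction k as [|k IH]; intros Hk.
    - simpl. unfold padd, vx, vy; apply pair_eq; simpl; lia.
    - replace (Datatypes.S k + n)%nat with (Datatypes.S (k + n)) by lia.
      rewrite HP by lia. rewrite IH by lia. rewrite Hstep by lia.
      rewrite app_nth2 by lia. replace (k + n - length m)%nat with k by (unfold n; lia).
      unfold padd; apply pair_eq; simpl; lia. }
  pose proof (core p n vx vy Hadj ltac:(intros i j Hi Hj Hij; apply HI; [lia|lia|exact Hij]) Hsh) as Hcore.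
  set (nZ := Z.of_nat n).
  assert (HnZ : nZ > 0) by (unfold nZ; lia).
  exists (fun t => (fst (p (Z.to_nat (t mod nZ))) + (t / nZ) * vx, snd (p (Z.to_nat (t mod nZ))) + (t / nZ) * vy)).
  split.
  - intros t. unfold biperiodic. fold n. fold nZ.
    pose proof (Z.mod_pos_bound t nZ ltac:(lia)) as B.
    destruct (divmod_succ t nZ HnZ) as [[H1 [H2 H3]]|[H1 [H2 H3]]]; rewrite H2, H3.
    + replace (Z.to_nat (t mod nZ + 1)) with (Datatypes.S (Z.to_nat (t mod nZ))) by lia.
      rewrite Hstep by (unfold nZ in *; lia). unfold padd; apply pair_eq; simpl; lia.
    + replace (Z.to_nat (t mod nZ)) with (Datatypes.S (n - 1) - 1)%nat by (unfold nZ in *; lia).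
      pose proof (Hstep (n - 1)%nat ltac:(lia)) as S1.
      replace (Datatypes.S (n - 1)) with n in S1 by lia.
      replace (Datatypes.S (n - 1) - 1)%nat with (n - 1)%nat by lia.
      simpl Z.to_nat.
      destruct (vec (nth (n - 1) m E)) as [dx dy] eqn:Ev.
      unfold padd in *; apply pair_eq; simpl.
      * assert (fst (p n) = fst (p (n-1)%nat) + dx) by (rewrite S1; auto). unfold vx. nia.
      * assert (snd (p n) = snd (p (n-1)%nat) + dy) by (rewrite S1; auto). unfold vy. nia.
  - intros s t Est. injection Est as F1 F2.
    pose proof (Z.mod_pos_bound s nZ ltac:(lia)) as B1.
    pose proof (Z.mod_pos_bound t nZ ltac:(lia)) as B2.
    pose proof (Z.div_mod s nZ ltac:(lia)) as D1.
    pose proof (Z.div_mod t nZ ltac:(lia)) as D2.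
    set (e1 := Z.to_nat (s mod nZ)) in *. set (e2 := Z.to_nat (t mod nZ)) in *.
    set (q1 := s / nZ) in *. set (q2 := t / nZ) in *.
    destruct (Nat.lt_total e1 e2) as [Hlt|[Heq|Hgt]].
    + exfalso. apply (Hcore e1 e2 (q1 - q2)); [unfold e1, e2, nZ in *; lia|nia|nia].
    + assert (Hc : (q1 - q2) * vx = 0 /\ (q1 - q2) * vy = 0) by (rewrite Heq in F1, F2; split; nia).
      assert (Hv : vx <> 0 \/ vy <> 0).
      { destruct (Z.eq_dec vx 0), (Z.eq_dec vy 0); auto. exfalso.
        assert (p n = p O) by (unfold vx, vy in *; apply pair_eq; lia).
        specialize (HI n O ltac:(lia) ltac:(lia) H). lia. }
      assert (q1 = q2).
      { destruct Hc as [C1 C2]. destruct Hv as [Hx|Hy]; [apply Z.mul_eq_0 in C1 | apply Z.mul_eq_0 in C2]; intuition lia. }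
      assert (s mod nZ = t mod nZ) by (unfold e1, e2 in Heq; lia).
      lia.
    + exfalso. apply (Hcore e2 e1 (q2 - q1)); [unfold e1, e2, nZ in *; lia|nia|nia].
Qed.
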